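(* Let $n\ge1$, $0\le p\le n$, $r>0$, and let $u:\Delta^n_p(r)\to[0,\infty]$ be a convex function. Then for every $r'$ with $\frac{r}{2}\le r'<r$ and every $x\in\Delta^n_p(r')$ with $x_1,\dots,x_p>0$, \[ u(x)\le\frac{(r')^p}{(r-r')^n}\int_{\Delta^n_p(r)}u\,d\mathbf{x}\cdot\frac{1}{\prod_{i=1}^p x_i}. \]
   Context: For $r>0$ and $0\le p\le n$, $\Delta^n_p(r):=\{x\in[0,\infty)^p\times(-r,r)^{n-p}\;:\;\sum_{i=1}^p x_i<r\}\subset\mathbb{R}^n$. $d\mathbf{x}$ is the $n$-dimensional Lebesgue measure. Convexity of $[0,\infty]$-valued functions is meant with the usual conventions for $+\infty$. *)

(* Defs.v *)
From HB Require Import structures.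
From mathcomp Require Import all_boot all_order all_algebra.
From mathcomp Require Import all_classical all_reals all_analysis.
Set Implicit Arguments. Unset Strict Implicit. Unset Printing Implicit Defensive.
Import Order.TTheory GRing.Theory Num.Theory.
Import numFieldNormedType.Exports.
Local Open Scope classical_set_scope.
Local Open Scope ring_scope.

(* Points of R^n are row vectors 'rV[R]_n; coordinate x_{i+1} is x 0 i. *)

Definition Delta (R : realType) (n p : nat) (r : R) : set 'rV[R]_n :=
  [set x | (forall i : 'I_n, (i < p)%N -> 0 <= x 0 i) /\
           (forall i : 'I_n, (p <= i)%N -> - r < x 0 i < r) /\
           \sum_(i < n | (i < p)%N) x 0 i < r].

(* n-dimensional Lebesgue integral of f over R^n, computed as the iterated
   integral dx_1 dx_2 ... dx_n of one-dimensional Lebesgue integrals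
   (Tonelli). *)
Fixpoint iter_lebesgue_integral (R : realType) (n : nat) :
  ('rV[R]_n -> \bar R) -> \bar R :=
  match n with
  | 0 => fun f => f 0
  | k.+1 => fun f =>
      (\int[@lebesgue_measure R]_(t in setT)
         iter_lebesgue_integral (fun y : 'rV[R]_k =>
           f (row_mx (const_mx t : 'rV[R]_1) y)))%E
  end.

Definition integral_on (R : realType) (n : nat) (D : set 'rV[R]_n)
  (u : 'rV[R]_n -> \bar R) : \bar R :=
  iter_lebesgue_integral (fun x => if `[< D x >] then u x else 0%E).

(* convexity of a [0,+oo]-valued function on D, with the usual conventions
   (0 * +oo = 0) *)
Definition econvex_on (R : realType) (n : nat) (D : set 'rV[R]_n)
  (u : 'rV[R]_n -> \bar R) : Prop :=
  forall (x y : 'rV[R]_n) (t : R), D x -> D y -> 0 <= t <= 1 ->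
    (u ((1 - t) *: x + t *: y)%R <= (1 - t)%:E * u x + t%:E * u y)%E.

(* Main.v *)
Require Import Defs.
From HB Require Import structures.
From mathcomp Require Import all_boot all_order all_algebra.
From mathcomp Require Import all_classical all_reals all_analysis.
From mathcomp Require Import lra ring.
Import Order.TTheory GRing.Theory Num.Theory.
Import numFieldNormedType.Exports.
Local Open Scope classical_set_scope.
Local Open Scope ring_scope.
Import HBNNSimple.

Lemma le_integralT d (T : measurableType d) (R : realType) (mu : {measure set T -> \bar R}) (f g : T -> \bar R) :
  (forall x, 0 <= f x)%E -> (forall x, f x <= g x)%E ->
  (\int[mu]_(x in setT) f x <= \int[mu]_(x in setT) g x)%E.
Proof.
move=> f0 fg.
have g0 : forall x, (0 <= g x)%E by move=> x; exact: le_trans (f0 x) (fg x).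
rewrite !ge0_integralTE //.
apply: ereal_sup_le => _ [h hf <-]; exists h => //= x; exact: le_trans (hf x) (fg x).
Qed.

Lemma iter_ge0 (R : realType) n : forall (f : 'rV[R]_n -> \bar R),
  (forall y, 0 <= f y)%E -> (0 <= iter_lebesgue_integral f)%E.
Proof.
elim: n => [|k IH] f f0 /=; first exact: f0.
by apply: integral_ge0 => t _; apply: IH.
Qed.

Lemma row_mx_ord0 (R : realType) k (t : R) (y : 'rV[R]_k) :
  (row_mx (const_mx t : 'rV_1) y) 0 ord0 = t.
Proof.
by rewrite (_ : ord0 = lshift k (0 : 'I_1)) ?row_mxEl ?mxE //; apply: val_inj.
Qed.

Lemma row_mx_lift (R : realType) k (t : R) (y : 'rV[R]_k) (j : 'I_k) :
  (row_mx (const_mx t : 'rV_1) y) 0 (lift ord0 j) = y 0 j.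
Proof.
by rewrite (_ : lift ord0 j = rshift 1 j) ?row_mxEr //; apply: val_inj.
Qed.
Lemma iter_box (R : realType) n : forall (f : 'rV[R]_n -> \bar R) (a b : 'I_n -> R) (c : \bar R),
 (0 <= c)%E -> (forall i, a i < b i) -> (forall y, 0 <= f y)%E ->
 (forall y : 'rV_n, (forall i, (a i < y 0 i < b i)%R) -> (c <= f y)%E) ->
 (c * (\prod_(i < n) (b i - a i))%:E <= iter_lebesgue_integral f)%E.
Proof.
elim: n => [|k IH] f a b c c0 ab f0 fc /=.
  by rewrite big_ord0 mule1; apply: fc => -[].
set P' := \prod_(i < k) (b (lift ord0 i) - a (lift ord0 i)).
have P'0 : 0 <= P' by apply: prodr_ge0 => i _; rewrite subr_ge0 ltW.
set K := (c * P'%:E)%E.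
have hK : forall t, a ord0 < t < b ord0 ->
   (K <= iter_lebesgue_integral (fun y => f (row_mx (const_mx t : 'rV_1) y)))%E.
  move=> t Ht; apply: IH => // y Hy; apply: fc => i.
  case: (unliftP ord0 i) => [j ->|->]; first by rewrite row_mx_lift.
  by rewrite row_mx_ord0.
rewrite big_ord_recl EFinM (muleC (_ %:E)) muleA -/K.
have -> : ((b ord0 - a ord0)%:E = (@lebesgue_measure R) [set` `]a ord0, b ord0[])%E.
  by rewrite lebesgue_measure_itv /= lte_fin ab EFinB.
rewrite -integral_cst; last exact: measurable_itv.
rewrite integral_mkcond.
apply: le_integralT => t.
  rewrite /patch; case: ifP => // _; exact: mule_ge0.
rewrite /patch; case: ifP => [|_].
  by rewrite inE /= in_itv /= => Ht; apply: hK.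
by apply: iter_ge0.
Qed.

Theorem mainTheorem2 (R : realType) (n p : nat) (r : R)
  (u : 'rV[R]_n -> \bar R) :
  (1 <= n)%N -> (p <= n)%N -> 0 < r ->
  (forall x, Delta p r x -> (0 <= u x)%E) ->
  econvex_on (Delta p r) u ->
  forall r' : R, r / 2 <= r' -> r' < r ->
  forall x : 'rV[R]_n, Delta p r' x ->
  (forall i : 'I_n, (i < p)%N -> 0 < x 0 i) ->
  (u x <= (r' ^+ p / (r - r') ^+ n)%:E * integral_on (Delta p r) u
           * ((\prod_(i < n | (i < p)%N) x 0 i)^-1)%:E)%E.
Proof.
move=> n1 pn r0 u0 ucvx r' hr' r'r x Dx xpos.
have r'0 : 0 < r' by lra.
set mu := r - r'.
have mu0 : 0 < mu by rewrite /mu; lra.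
have mur' : mu <= r' by rewrite /mu; lra.
set lam := mu / r'.
have lam0 : 0 < lam by rewrite /lam divr_gt0.
have lam1 : lam <= 1 by rewrite /lam ler_pdivrMr // mul1r.
pose del (i : 'I_n) := if (i < p)%N then lam * x 0 i else mu.
have del0 : forall i, 0 < del i.
  by move=> i; rewrite /del; case: ifP => ip //; rewrite mulr_gt0 // xpos.
pose inS (y : 'rV[R]_n) := forall i, `|y 0 i - x 0 i| < del i.
case: Dx => Dx1 [Dx2 Dx3].
have SD : forall y, inS y -> Delta p r y.
  move=> y Sy; split; [|split].
  - move=> i ip; have := Sy i; rewrite /del ip ltr_norml => /andP[h1 h2].
    have := xpos i ip; nra.
  - move=> i ip; rewrite leqNgt in ip; have := Sy i.
    rewrite /del (negbTE ip) ltr_norml => /andP[h1 h2].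
    have := Dx2 i; rewrite leqNgt ip => /(_ isT) /andP[h3 h4].
    rewrite /mu in h1 h2; apply/andP; split; lra.
  - apply: (@le_lt_trans _ _ (\sum_(i < n | (i < p)%N) (1 + lam) * x 0 i)).
      apply: ler_sum => i ip; have := Sy i; rewrite /del ip ltr_norml.
      move=> /andP[h1 h2]; lra.
    rewrite -mulr_sumr.
    have -> : r = (1 + lam) * r'.
      by rewrite mulrDl mul1r /lam divfK ?gt_eqF // /mu; ring.
    by rewrite ltr_pM2l // ltr_wpDr // ltW.
have Sx : inS x by move=> i; rewrite subrr normr0.
have ux0 : (0 <= u x)%E by apply: u0; exact: SD.
pose a (s : 'I_n -> bool) i := if s i then x 0 i else x 0 i - del i.
pose box s (y : 'rV[R]_n) := forall i, a s i < y 0 i < a s i + del i.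
have boxS : forall s y, box s y -> inS y.
  move=> s y By i; have := By i; rewrite /a; case: (s i) => /andP[h1 h2];
  rewrite ltr_norml; apply/andP; split; lra.
case: (pselect (exists s, forall y, box s y -> (u x <= u y)%E)) => [[s Hs]|Hns].
  have I1 : (u x * (\prod_(i < n) del i)%:E <= integral_on (Delta p r) u)%E.
    rewrite /integral_on.
    have -> : \prod_(i < n) del i = \prod_(i < n) ((a s i + del i) - a s i).
      by apply: eq_bigr => i _; rewrite addrC addKr.
    apply: (@iter_box R n _ (a s) (fun i => a s i + del i)) => //.
    - by move=> i; rewrite ltrDl.
    - by move=> y; case: asboolP => // /u0.
    - move=> y By; have Dy := SD y (boxS s y By); rewrite asboolT //; exact: Hs.
  set P := \prod_(i < n | (i < p)%N) x 0 i.
  have P0 : 0 < P by apply: prodr_gt0 => i ip; exact: xpos.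
  set Q := \prod_(i < n | ~~ (i < p)%N) mu.
  have Q0 : 0 < Q by apply: prodr_gt0.
  have E1 : \prod_(i < n | (i < p)%N) del i = lam ^+ p * P.
    rewrite (eq_bigr (fun i => lam * x 0 i)) => [|i ip]; last by rewrite /del ip.
    by rewrite big_split /= -(big_ord_widen n (fun _ => lam) pn) prodr_const card_ord.
  have E2 : \prod_(i < n | ~~ (i < p)%N) del i = Q.
    by apply: eq_bigr => i /negbTE ip; rewrite /del ip.
  have E3 : mu ^+ n = mu ^+ p * Q.
    have <- : \prod_(i < n) mu = mu ^+ n by rewrite prodr_const card_ord.
    by rewrite (bigID (fun i : 'I_n => (i < p)%N)) /= -(big_ord_widen n (fun _ => mu) pn) prodr_const card_ord.
  have key : r' ^+ p / mu ^+ n * \prod_(i < n) del i * P^-1 = 1.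
    rewrite (bigID (fun i : 'I_n => (i < p)%N)) /= E1 E2 E3 /lam expr_div_n.
    have rpn : r' ^+ p != 0 by rewrite expf_neq0 // gt_eqF.
    have mpn : mu ^+ p != 0 by rewrite expf_neq0 // gt_eqF.
    have Pn := gt_eqF P0; have Qn := gt_eqF Q0.
    by field; rewrite ?rpn ?mpn ?Pn ?Qn ?(gt_eqF r'0) ?(gt_eqF mu0).
  rewrite -[u x]mule1 -key 2!EFinM muleA muleCA.
  apply: lee_pmul => //.
  - apply: mule_ge0; first by rewrite lee_fin divr_ge0 // exprn_ge0 // ltW.
    by apply: mule_ge0 => //; rewrite lee_fin prodr_ge0 // => i _; rewrite ltW.
  - by rewrite lee_fin invr_ge0 ltW.
  apply: lee_pmul => //; first by rewrite lee_fin divr_ge0 // exprn_ge0 // ltW.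
  by apply: mule_ge0 => //; rewrite lee_fin prodr_ge0 // => i _; rewrite ltW.
have H0 : forall s, exists y, box s y /\ (u y < u x)%E.
  move=> s; case: (pselect (exists y, box s y /\ (u y < u x)%E)) => // Hn.
  exfalso; apply: Hns; exists s => y By; rewrite leNgt; apply/negP => Hlt.
  by apply: Hn; exists y.
have Hk : forall k, (k <= n)%N -> forall s : 'I_n -> bool, exists y,
    [/\ inS y, (u y < u x)%E, (forall i : 'I_n, (i < k)%N -> y 0 i = x 0 i) &
     (forall i : 'I_n, (k <= i)%N -> if s i then x 0 i < y 0 i else y 0 i < x 0 i)].
  elim => [_ s|k IH kn s].
    have [y [By uy]] := H0 s; exists y; split => //; first exact: boxS By.
    by move=> i _; have := By i; rewrite /a; case: (s i) => /andP[h1 h2]; lra.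
  have kn' : (k <= n)%N by apply: ltnW.
  pose k' := Ordinal kn.
  have [y1 [S1 u1 E1 G1]] := IH kn' (fun i => if i == k' then true else s i).
  have [y2 [S2 u2 E2 G2]] := IH kn' (fun i => if i == k' then false else s i).
  have h1 : x 0 k' < y1 0 k' by have := G1 k' (leqnn k); rewrite eqxx.
  have h2 : y2 0 k' < x 0 k' by have := G2 k' (leqnn k); rewrite eqxx.
  have h12 : 0 < y1 0 k' - y2 0 k' by rewrite subr_gt0 (lt_trans h2 h1).
  pose t := (y1 0 k' - x 0 k') / (y1 0 k' - y2 0 k').
  have t0 : 0 < t by rewrite divr_gt0 // subr_gt0.
  have t1 : t < 1 by rewrite ltr_pdivrMr // mul1r; lra.
  pose z := (1 - t) *: y1 + t *: y2.
  have zE : forall i, z 0 i = (1 - t) * y1 0 i + t * y2 0 i by move=> i; rewrite !mxE.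
  exists z; split.
  - move=> i; rewrite zE; have := S1 i; have := S2 i; rewrite !ltr_norml.
    move=> /andP[a1 a2] /andP[b1 b2]; apply/andP; split; nra.
  - have tt : 0 <= t <= 1 by rewrite (ltW t0) (ltW t1).
    have hz := ucvx y1 y2 t (SD _ S1) (SD _ S2) tt.
    apply: le_lt_trans hz _.
    move: u1 u2 ux0 (u0 _ (SD _ S1)) (u0 _ (SD _ S2)).
    case: (u x) => [c0||]; case: (u y1) => [c1||]; case: (u y2) => [c2||] => //=.
      rewrite !lte_fin !lee_fin => q1 q2 q0 q3 q4.
      nra.
    by move=> *; rewrite ?ltry.
  - move=> i ik; case: (ltnP i k) => ik'.
      by rewrite zE E1 // E2 //; ring.
    have -> : i = k' by apply: val_inj; apply/eqP; rewrite eqn_leq ik' -ltnS ik.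
    by rewrite zE /t; field; rewrite gt_eqF.
  - move=> i ki.
    have ik : (i == k') = false by apply/eqP => /(congr1 val) /= ik; rewrite ik ltnn in ki.
    have := G1 i (ltnW ki); have := G2 i (ltnW ki); rewrite ik zE.
    case: (s i) => g2 g1; nra.
have [y [_ uy Ey _]] := Hk n (leqnn n) (fun _ => true).
have yx : y = x by apply/rowP => i; apply: Ey; exact: ltn_ord.
by rewrite yx ltxx in uy.
Qed.
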